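(* Let $G$ be a graph on $n$ vertices. If $G$ is a forest, then $G$ is $(1,b)$-colorable for every integer $b \geq 4\sqrt{2}\sqrt{n}$. If $G$ is a triangle-free outerplanar graph, then $G$ is $(1,b)$-colorable for every integer $b \geq 4\sqrt{34/5}\sqrt{n} - 1$.
   Context: A set of vertices $X$ is $2$-independent if any two distinct vertices of $X$ are at distance at least $3$. A graph is $(a,b)$-colorable if its vertex set can be partitioned into $a$ independent sets and $b$ $2$-independent sets (some parts may be empty). *)

(* Defs.v *)
From mathcomp Require Import all_boot.
Set Implicit Arguments. Unset Strict Implicit. Unset Printing Implicit Defensive.

Definition simple_graph (T : finType) (e : rel T) : Prop :=
  symmetric e /\ irreflexive e.

Definition independent (T : finType) (e : rel T) (X : {set T}) : Prop :=
  forall x y, x \in X -> y \in X -> ~~ e x y.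

(* X is 2-independent: any two distinct vertices of X are at distance >= 3,
   i.e. they are neither adjacent nor have a common neighbour. *)
Definition two_independent (T : finType) (e : rel T) (X : {set T}) : Prop :=
  forall x y, x \in X -> y \in X -> x != y ->
    ~~ e x y /\ (forall z, ~~ (e x z && e z y)).

(* (a,b)-colorable: V is partitioned into a independent sets (colours inl i)
   and b 2-independent sets (colours inr j); parts may be empty. *)
Definition ab_colorable (T : finType) (e : rel T) (a b : nat) : Prop :=
  exists f : T -> ('I_a + 'I_b)%type,
    (forall i : 'I_a, independent e [set x | f x == inl i]) /\
    (forall j : 'I_b, two_independent e [set x | f x == inr j]).

Definition has_cycle (T : finType) (e : rel T) : Prop :=
  exists s : seq T, 3 <= size s /\ uniq s /\ cycle e s.

Definition forest (T : finType) (e : rel T) : Prop := ~ has_cycle e.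

Definition triangle_free (T : finType) (e : rel T) : Prop :=
  forall x y z, ~ [/\ e x y, e y z & e z x].

(* Outerplanar: the vertices can be placed (injectively) on a circle, in the
   cyclic order given by pos, so that the edges, drawn as chords, do not
   cross: there are no edges {a,b}, {c,d} with
   pos a < pos c < pos b < pos d. *)
Definition outerplanar (T : finType) (e : rel T) : Prop :=
  exists pos : T -> nat, injective pos /\
    forall a b c d, e a b -> e c d ->
      ~ (pos a < pos c /\ pos c < pos b /\ pos b < pos d).

(* Main.v *)
Require Import Defs.
From Stdlib Require Import Reals.
From mathcomp Require Import all_boot.
From Stdlib Require Import Lia Lra.
From mathcomp Require Import zify.
Set Implicit Arguments. Unset Strict Implicit. Unset Printing Implicit Defensive.


Section Generic.
Variable T : finType.
Variable e : rel T.
Hypothesis esym : symmetric e.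

Definition conf (u v : T) := e u v || [exists z, e u z && e z v].

Lemma conf_sym u v : conf u v -> conf v u.
Proof.
rewrite /conf => /orP[h|/existsP[z /andP[h1 h2]]]; apply/orP.
  by left; rewrite esym.
by right; apply/existsP; exists z; rewrite esym h2 esym h1.
Qed.

Lemma greedy (r : T -> nat) (k : nat) : injective r -> forall S : {set T},
  (forall u, u \in S -> #|[set v in S | (r u < r v) && conf u v]| < k) ->
  exists g : T -> nat, (forall u, u \in S -> g u < k) /\
    (forall u v, u \in S -> v \in S -> r u < r v -> conf u v -> g u != g v).
Proof.
move=> rinj S; move: {2}#|S| (erefl #|S|) => n; elim: n S => [|n IH] S cS hS.
  exists (fun _ => 0); rewrite (cards0_eq cS); split=> [u|u v]; by rewrite inE.
have [x0 Sx0] : exists x, x \in S by apply/card_gt0P; rewrite cS.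
case: (arg_minnP r Sx0) => m Sm mmin.
set S' := S :\ m.
have Sm2 : m \in S := Sm.
have cS' : #|S'| = n by move: cS; rewrite (cardsD1 m S) Sm2; case.
have [g' [g'k g'd]] : exists g : T -> nat, (forall u, u \in S' -> g u < k) /\
    (forall u v, u \in S' -> v \in S' -> r u < r v -> conf u v -> g u != g v).
  apply: (IH S' cS') => u; rewrite inE => /andP[_ Su].
  apply: leq_ltn_trans (hS u Su); apply: subset_leq_card; apply/subsetP => v.
  by rewrite !inE => /andP[/andP[_ ->] ->].
set Cf := [set v in S' | (r m < r v) && conf m v].
have hCf : #|Cf| < k.
  apply: leq_ltn_trans (hS m Sm); apply: subset_leq_card; apply/subsetP => v.
  by rewrite !inE => /andP[/andP[_ ->] ->].
set L := [seq g' v | v <- enum Cf].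
have : ~~ all (mem L) (iota 0 k).
  apply/negP => /allP sub.
  have := uniq_leq_size (iota_uniq 0 k) sub.
  by rewrite size_iota size_map -cardE; lia.
case/allPn => c; rewrite mem_iota add0n => /andP[_ ck] cL.
exists (fun x => if x == m then c else g' x); split.
  move=> u Su; case: (eqVneq u m) => // um; apply: g'k; by rewrite /S' in_setD1 um Su.
move=> u v Su Sv ruv cuv.
have vm : v != m.
  apply/eqP => vm; move: (mmin u Su); rewrite -vm; lia.
rewrite (negbTE vm).
case: (eqVneq u m) => [um|um].
  subst u.
  apply/eqP => cv; move: cL; rewrite cv; apply/negP; rewrite negbK.
  by apply/mapP; exists v => //; rewrite mem_enum /Cf /S' !inE vm Sv ruv cuv.
by apply: (g'd u v); rewrite /S' ?in_setD1 ?um ?vm.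
Qed.


Lemma gcl (H I : {set T}) (r : T -> nat) (k b : nat) :
  injective r ->
  (forall x y, x \in I -> y \in I -> ~~ e x y) ->
  (forall x, x \in I -> x \notin H) ->
  (forall u, u \notin I -> u \notin H ->
     #|[set v | [&& v \notin I, v \notin H, r u < r v & conf u v]]| < k) ->
  #|H| + k <= b -> ab_colorable e 1 b.
Proof.
move=> rinj indI IH hk kb.
set S := [set x | (x \notin I) && (x \notin H)].
have hS : forall u, u \in S -> #|[set v in S | (r u < r v) && conf u v]| < k.
  move=> u; rewrite inE => /andP[uI uH].
  apply: leq_ltn_trans (hk u uI uH); apply: subset_leq_card; apply/subsetP => v.
  by rewrite !inE => /andP[/andP[-> ->] ->].
have [g [gk gd]] := @greedy r k rinj S hS.
pose col x := if x \in H then index x (enum H) else #|H| + g x.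
have colb : forall x, x \notin I -> col x < b.
  move=> x xI; rewrite /col; case: ifP => xH.
    by apply: leq_trans kb; apply: leq_trans (leq_addr _ _); rewrite cardE index_mem mem_enum.
  apply: leq_trans kb; rewrite ltn_add2l; apply: gk; by rewrite inE xI xH.
pose f x : 'I_1 + 'I_b := if x \in I then inl ord0 else odflt (inl ord0) (omap inr (insub (col x))).
have fI : forall x, x \notin I -> exists o : 'I_b, f x = inr o /\ val o = col x.
  move=> x xI; rewrite /f (negbTE xI); case: insubP => [o _ oval|]; last by rewrite colb.
  by exists o.
exists f; split.
  move=> i x y; rewrite !inE => fx fy.
  have xI : x \in I.
    apply/negPn/negP => /fI [o [fo _]]; by rewrite fo in fx.
  have yI : y \in I.
    apply/negPn/negP => /fI [o [fo _]]; by rewrite fo in fy.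
  exact: indI.
move=> j x y; rewrite !inE => fx fy xy.
have xI : x \notin I by apply/negP => xI; move: fx; rewrite /f xI.
have yI : y \notin I by apply/negP => yI; move: fy; rewrite /f yI.
have [ox [fox vox]] := fI x xI; have [oy [foy voy]] := fI y yI.
have cxy : col x = col y.
  move: fx fy; rewrite fox foy => /eqP [e1] /eqP [e2]; by rewrite -vox -voy e1 e2.
have ncf : ~~ conf x y.
  move: cxy; rewrite /col; case: ifP => xH; case: ifP => yH.
  - move=> ixy; case/negP: xy; apply/eqP.
    by rewrite -(nth_index x (_ : x \in enum H)) ?mem_enum // ixy nth_index ?mem_enum.
  - move=> ixy; have : index x (enum H) < #|H| by rewrite cardE index_mem mem_enum.
    by rewrite ixy; lia.
  - move=> ixy; have : index y (enum H) < #|H| by rewrite cardE index_mem mem_enum.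
    by rewrite -ixy; lia.
  - move=> /eqP; rewrite eqn_add2l => /eqP gxy.
    have Sx : x \in S by rewrite inE xI xH.
    have Sy : y \in S by rewrite inE yI yH.
    apply/negP => cf.
    have rxy : r x != r y by apply/eqP => /rinj /eqP; apply/negP.
    case: (ltngtP (r x) (r y)) => [lt|gt|eq]; last by rewrite eq eqxx in rxy.
      by move: (gd x y Sx Sy lt cf); rewrite gxy eqxx.
    by move: (gd y x Sy Sx gt (conf_sym cf)); rewrite gxy eqxx.
move: ncf; rewrite /conf negb_or => /andP[-> nz]; split => // z.
by apply/negP => hz; case/negP: nz; apply/existsP; exists z.
Qed.

End Generic.


Section Deg.
Variable T : finType.
Variable e : rel T.
Hypothesis esym : symmetric e.
Hypothesis eirr : irreflexive e.

Definition deg x := #|[set y | e x y]|.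
Definition par (r : T -> nat) x := [set y | e x y && (r x < r y)].

Lemma card_sum (P : pred T) : #|[set y | P y]| = \sum_y (P y : nat).
Proof.
rewrite -sum1_card big_mkcond /=; apply: eq_bigr => y _; by rewrite inE; case: (P y).
Qed.

Lemma degsum (r : T -> nat) k : injective r -> (forall x, #|par r x| <= k) ->
  forall d, #|[set x | d < deg x]| * d.+1 <= 2 * k * #|T|.
Proof.
move=> rinj hk d.
have e1 : \sum_x deg x = \sum_x #|par r x| + \sum_x #|[set y | e x y && (r y < r x)]|.
  rewrite -big_split /=; apply: eq_bigr => x _.
  rewrite /deg /par !card_sum -big_split /=; apply: eq_bigr => y _.
  case: (eqVneq x y) => [<-|xy]; first by rewrite eirr.
  have : r x != r y by apply/eqP => /rinj /eqP; apply/negP.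
  by case: (e x y) => //=; case: ltngtP.
have e2 : \sum_x #|[set y | e x y && (r y < r x)]| = \sum_x #|par r x|.
  rewrite /par; under eq_bigr do rewrite card_sum.
  rewrite exchange_big /=; apply: eq_bigr => y _; rewrite card_sum.
  by apply: eq_bigr => x _; rewrite esym.
have e3 : \sum_x #|par r x| <= k * #|T|.
  rewrite -sum1_card big_distrr /= muln1; apply: leq_sum => x _; exact: hk.
have e4 : #|[set x | d < deg x]| * d.+1 <= \sum_x deg x.
  rewrite -sum1_card big_distrl /=.
  apply: (@leq_trans (\sum_(x in [set x | d < deg x]) deg x)).
    by apply: leq_sum => x; rewrite inE mul1n.
  rewrite [X in _ <= X](bigID (fun x => x \in [set x | d < deg x])) /=.
  exact: leq_addr.
lia.
Qed.

Lemma degen_rank k :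
  (forall A : {set T}, A != set0 -> exists2 x, x \in A & #|[set y in A | e x y]| <= k) ->
  exists r : T -> nat, injective r /\ forall x, #|par r x| <= k.
Proof.
move=> hdeg.
suff : forall A : {set T}, exists r : T -> nat, {in A &, injective r} /\
    forall x, x \in A -> #|[set y in A | e x y && (r x < r y)]| <= k.
  case/(_ setT) => r [ri rk]; exists r; split.
    by move=> x y; apply: ri; rewrite inE.
  move=> x; have := rk x (in_setT x); rewrite /par.
  by congr (_ <= _); apply: eq_card => y; rewrite !inE.
move=> A; move: {2}#|A| (erefl #|A|) => n; elim: n A => [|n IH] A cA.
  by exists (fun _ => 0); rewrite (cards0_eq cA); split=> [x|x]; rewrite inE.
have A0 : A != set0 by rewrite -card_gt0 cA.
have [x0 Ax0 hx0] := hdeg A A0.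
have cA' : #|A :\ x0| = n by move: cA; rewrite (cardsD1 x0 A) Ax0; case.
have [r' [ri rk]] := IH _ cA'.
exists (fun y => if y == x0 then 0 else (r' y).+1); split.
  move=> x y Ax Ay; case: (eqVneq x x0) => [->|xx0]; case: (eqVneq y x0) => [->|yx0] //.
  move=> [] /ri; apply; by rewrite in_setD1 ?xx0 ?yx0.
move=> x Ax; case: (eqVneq x x0) => [->|xx0].
  apply: leq_trans hx0; apply: subset_leq_card; apply/subsetP => y.
  by rewrite !inE => /andP[-> /andP[-> _]].
have Ax' : x \in A :\ x0 by rewrite in_setD1 xx0.
apply: leq_trans (rk x Ax'); apply: subset_leq_card; apply/subsetP => y.
rewrite !inE => /andP[Ay /andP[exy]]; case: (eqVneq y x0) => // yx0.
move=> lt.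
by rewrite Ay exy -ltnS lt.
Qed.

End Deg.


Section Forest.
Variable T : finType.
Variable e : rel T.
Hypothesis esym : symmetric e.
Hypothesis eirr : irreflexive e.

Lemma cycle_from x s y : path e x s -> uniq (x :: s) -> y \in s -> y != head y s ->
  e x y -> has_cycle e.
Proof.
move=> ps us ys yh exy; case/splitPr: ys ps us yh => p q ps us yh.
have p0 : p != [::] by case: p ps us yh => //=; rewrite eqxx.
exists (x :: rcons p y); split; [|split].
- by case: p p0 {ps us yh} => //= a p _; rewrite size_rcons.
- move: us; rewrite -cat_rcons -cat_cons cat_uniq; by case/andP.
- rewrite /cycle rcons_path last_rcons (esym y x) exy andbT.
  by move: ps; rewrite -cat_rcons cat_path => /andP[].
Qed.

Definition goodp (A : {set T}) (s : seq T) :=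
  [&& (if s is x :: s' then path e x s' else false), uniq s & all (fun y => y \in A) s].

Lemma forest_degen : forest e -> forall A : {set T}, A != set0 ->
  exists2 x, x \in A & #|[set y in A | e x y]| <= 1.
Proof.
move=> fe A A0.
case: (boolP [exists x in A, #|[set y in A | e x y]| <= 1]) => [/exists_inP[x Ax h]|].
  by exists x.
move/exists_inPn => hall; exfalso.
have [a Aa] : exists a, a \in A by apply/set0Pn.
have grow : forall m, exists s, goodp A s /\ size s = m.+1.
  elim=> [|m [s [gs ss]]].
    by exists [:: a]; rewrite /goodp /= Aa.
  case: s gs ss => // x s' /and3P[ps us as_] ss.
  have Ax : x \in A by move: as_ => /= /andP[].
  have := hall x Ax; rewrite -ltnNge => /card_gt1P [y1 [y2 [Y1 Y2 y12]]].
  move: Y1 Y2; rewrite !inE => /andP[Ay1 e1] /andP[Ay2 e2].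
  case: (boolP (y1 \in x :: s')) => [i1|n1]; last first.
    exists (y1 :: x :: s'); split; last by move: ss => /= [->].
    rewrite /goodp /= (esym y1 x) e1 ps n1 Ay1 /=; rewrite /= in us as_; by rewrite us as_.
  case: (boolP (y2 \in x :: s')) => [i2|n2]; last first.
    exists (y2 :: x :: s'); split; last by move: ss => /= [->].
    rewrite /goodp /= (esym y2 x) e2 ps n2 Ay2 /=; rewrite /= in us as_; by rewrite us as_.
  have yx1 : y1 != x by apply/eqP => h; rewrite h eirr in e1.
  have yx2 : y2 != x by apply/eqP => h; rewrite h eirr in e2.
  move: i1 i2; rewrite !inE (negbTE yx1) (negbTE yx2) /= => i1 i2.
  case: (eqVneq y1 (head y1 s')) => h1.
    have h2 : y2 != head y2 s'.
      by case: s' i1 h1 {ps us as_ ss i2} => //= z s'' _ <-; rewrite eq_sym.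
    by case: fe; apply: (@cycle_from x s' y2).
  by case: fe; apply: (@cycle_from x s' y1).
have [s [/and3P[_ us _] ss]] := grow #|T|.
move/card_uniqP: us; rewrite ss => h.
by have := max_card (mem s); rewrite h ltnn.
Qed.

Lemma forest_rank : forest e -> exists r : T -> nat, injective r /\ forall x, #|par e r x| <= 1.
Proof. move=> fe; apply: degen_rank; exact: forest_degen. Qed.

End Forest.


Section FCol.
Variable T : finType.
Variable e : rel T.
Hypothesis esym : symmetric e.
Hypothesis eirr : irreflexive e.

Lemma le1_eq (A : {set T}) x y : #|A| <= 1 -> x \in A -> y \in A -> x = y.
Proof.
move=> h xA yA; apply/eqP/negPn/negP => xy.
have : #|[set x; y]| <= #|A|.
  by apply: subset_leq_card; apply/subsetP => z; rewrite !inE => /orP[]/eqP->.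
by rewrite cards2 xy; lia.
Qed.

Lemma conf_cases (r : T -> nat) u v : injective r -> r u < r v -> conf e u v ->
  [\/ v \in par e r u,
      exists2 z, z \in par e r u & e z v /\ v != u |
      exists z, [/\ u \in par e r z, v \in par e r z & v != u]].
Proof.
move=> rinj ruv; have vu : v != u by apply/eqP => h; rewrite h ltnn in ruv.
case/orP => [euv|/existsP[z /andP[euz ezv]]].
  by apply: Or31; rewrite inE euv ruv.
have rzu : r z != r u.
  by apply/eqP => /rinj h; rewrite h eirr in euz.
case: (ltngtP (r u) (r z)) => [lt|gt|eq]; last by rewrite eq eqxx in rzu.
  by apply: Or32; exists z => //; rewrite inE euz lt.
apply: Or33; exists z; split => //; rewrite inE.
  by rewrite esym euz gt.
by rewrite ezv (ltn_trans gt ruv).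
Qed.

Lemma forest_col (r : T -> nat) d b : injective r -> (forall x, #|par e r x| <= 1) ->
  #|[set x | d < deg e x]| + d.+1 <= b -> ab_colorable e 1 b.
Proof.
move=> rinj r1 hb.
set H := [set x | d < deg e x].
set I := [set x | (deg e x <= d) && [exists y, (y \in par e r x) && (d < deg e y)]].
apply: (@gcl _ e esym H I r d.+1 b rinj) => //.
- move=> x y; rewrite !inE => /andP[dx /existsP[x' /andP[px' hx']]] /andP[dy /existsP[y' /andP[py' hy']]].
  apply/negP => exy.
  have rxy : r x != r y by apply/eqP => /rinj h; rewrite h eirr in exy.
  case: (ltngtP (r x) (r y)) => [lt|gt|eq]; last by rewrite eq eqxx in rxy.
    have : y \in par e r x by rewrite inE exy lt.
    move/(le1_eq (r1 x) px') => h; rewrite h in hx'; lia.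
  have : x \in par e r y by rewrite inE esym exy gt.
  move/(le1_eq (r1 y) py') => h; rewrite h in hy'; lia.
- by move=> x; rewrite !inE => /andP[h _]; rewrite -leqNgt.
move=> u uI uH.
have du : deg e u <= d by move: uH; rewrite inE -leqNgt.
have nohp : forall p, p \in par e r u -> deg e p <= d.
  move=> p pp; rewrite leqNgt; apply/negP => hp; case/negP: uI.
  by rewrite inE du; apply/existsP; exists p; rewrite pp hp.
set C := [set v | _].
case: (set_0Vmem (par e r u)) => [p0|[p pp]].
  suff -> : C = set0 by rewrite cards0.
  apply/setP => v; rewrite !inE; apply/negP => /and4P[_ _ ruv cuv].
  case: (conf_cases rinj ruv cuv) => [|[z]|[z [h1 h2 h3]]]; rewrite ?p0 ?inE //.
  by case/eqP: h3; apply: (le1_eq (r1 z)).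
have sub : C \subset p |: ([set y | e p y] :\ u).
  apply/subsetP => v; rewrite !inE => /and4P[_ _ ruv cuv].
  case: (conf_cases rinj ruv cuv) => [pv|[z pz [ezv vu]]|[z [h1 h2 h3]]].
  - by rewrite (le1_eq (r1 u) pp pv) eqxx.
  - by rewrite (le1_eq (r1 u) pp pz) ezv vu orbT.
  - by case/eqP: h3; apply: (le1_eq (r1 z)).
apply: leq_ltn_trans (subset_leq_card sub) _.
have pu : u \in [set y | e p y] by move: pp; rewrite !inE esym => /andP[->].
rewrite cardsU1.
have := nohp p pp; rewrite /deg (cardsD1 u [set y | e p y]) pu /=.
by case: (p \notin _); lia.
Qed.

End FCol.


Section Outer.
Variable T : finType.
Variable e : rel T.
Variable pos : T -> nat.
Hypothesis esym : symmetric e.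
Hypothesis eirr : irreflexive e.
Hypothesis pinj : injective pos.
Hypothesis nc : forall a b c d, e a b -> e c d ->
  ~ (pos a < pos c /\ pos c < pos b /\ pos b < pos d).

Definition btw (x y t : T) := (pos x < pos t < pos y) || (pos y < pos t < pos x).
Definition covers x t := [exists y, e x y && btw x y t].
Definition Cov x := [set q : T * T | e q.1 q.2 && (pos q.1 < pos x < pos q.2)].
Definition depth x := #|Cov x|.

Lemma coversP x t : reflect (exists y, e x y /\ btw x y t) (covers x t).
Proof.
apply: (iffP existsP) => [[y /andP[h1 h2]]|[y [h1 h2]]]; exists y => //; by rewrite h1 h2.
Qed.

Lemma nc4 a b c d : e a b -> e c d ->
  [/\ ~ (pos a < pos c /\ pos c < pos b /\ pos b < pos d),
      ~ (pos b < pos c /\ pos c < pos a /\ pos a < pos d),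
      ~ (pos a < pos d /\ pos d < pos b /\ pos b < pos c) &
      ~ (pos b < pos d /\ pos d < pos a /\ pos a < pos c)].
Proof.
move=> h1 h2; have h1' : e b a by rewrite esym.
have h2' : e d c by rewrite esym.
split; [exact: nc h1 h2|exact: nc h1' h2|exact: nc h1 h2'|exact: nc h1' h2'].
Qed.

Lemma epneq a b : e a b -> pos a != pos b.
Proof. by move=> h; apply/eqP => /pinj ab; rewrite ab eirr in h. Qed.

Lemma core x t : e x t -> pos x < pos t ->
  [/\ covers x t -> covers t x -> False,
      ~~ covers t x -> Cov x \subset Cov t,
      ~~ covers x t -> Cov t \subset Cov x,
      covers x t -> ~~ (Cov t \subset Cov x) &
      covers t x -> ~~ (Cov x \subset Cov t)].
Proof.
move=> ext lt; split.
- case/coversP => y [exy b1] /coversP [z [etz b2]].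
  have ezt : e z t by rewrite esym.
  case: (nc4 ezt exy) => h1 h2 h3 h4; move: b1 b2; rewrite /btw; lia.
- move=> nct; apply/subsetP => [[a c]]; rewrite !inE /= => /andP[eac l].
  rewrite eac /=.
  case: (eqVneq c t) => [ct|ct].
    subst c; case/negP: nct; apply/coversP; exists a; split; first by rewrite esym.
    rewrite /btw; lia.
  have : pos c != pos t by apply/eqP => /pinj; apply/eqP.
  case: (nc4 eac ext) (nc4 ext eac) => h1 h2 h3 h4 [h5 h6 h7 h8]; lia.
- move=> nct; apply/subsetP => [[a c]]; rewrite !inE /= => /andP[eac l].
  rewrite eac /=.
  case: (eqVneq a x) => [ax|ax].
    subst a; case/negP: nct; apply/coversP; exists c; split => //.
    rewrite /btw; lia.
  have : pos a != pos x by apply/eqP => /pinj; apply/eqP.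
  case: (nc4 eac ext) (nc4 ext eac) => h1 h2 h3 h4 [h5 h6 h7 h8]; lia.
- case/coversP => y [exy b1]; apply/negP => /subsetP /(_ (x, y)).
  rewrite /Cov !inE /= exy ltnn andbF /= => h.
  suff : false by []. apply: h; move: b1; rewrite /btw; lia.
- case/coversP => z [etz b2]; apply/negP => /subsetP /(_ (z, t)).
  rewrite /Cov !inE /= esym etz ltnn andbF /= => h.
  suff : false by []. apply: h; move: b2; rewrite /btw; lia.
Qed.

Lemma no_both x t : e x t -> covers x t -> covers t x -> False.
Proof.
move=> ext c1 c2; have := epneq ext; case: (ltngtP (pos x) (pos t)) => // lt _.
  by case: (core ext lt) => h _ _ _ _; apply: h.
have etx : e t x by rewrite esym.
by case: (core etx lt) => h _ _ _ _; apply: h.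
Qed.

Lemma depth_lt x t : e x t -> covers x t -> depth x < depth t.
Proof.
move=> ext cxt; have nctx : ~~ covers t x by apply/negP => /(no_both ext cxt).
rewrite /depth; apply: proper_card; rewrite properE.
have := epneq ext; case: (ltngtP (pos x) (pos t)) => // lt _.
  by case: (core ext lt) => _ h1 _ h2 _; rewrite h1 // h2.
have etx : e t x by rewrite esym.
by case: (core etx lt) => _ _ h1 _ h2; rewrite h1 // h2.
Qed.

Lemma depth_eq x t : e x t -> ~~ covers x t -> ~~ covers t x -> depth x = depth t.
Proof.
move=> ext c1 c2; rewrite /depth; suff -> : Cov x = Cov t by []; apply/eqP; rewrite eqEsubset.
have := epneq ext; case: (ltngtP (pos x) (pos t)) => // lt _.
  by case: (core ext lt) => _ h1 h2 _ _; rewrite h1 // h2.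
have etx : e t x by rewrite esym.
by case: (core etx lt) => _ h1 h2 _ _; rewrite h1 // h2.
Qed.

Lemma cov_of_lt x t : e x t -> depth x < depth t -> covers x t.
Proof.
move=> ext lt; case: (boolP (covers x t)) => // c1.
case: (boolP (covers t x)) => c2.
  have etx : e t x by rewrite esym.
  by have := depth_lt etx c2; lia.
by have := depth_eq ext c1 c2; lia.
Qed.


Hypothesis tri : triangle_free e.

Definition ncd (a b c d : T) := True.

Ltac ncall := repeat match goal with
  | H1 : is_true (e ?a ?b), H2 : is_true (e ?c ?d) |- _ =>
     lazymatch goal with
     | _ : ncd a b c d |- _ => fail
     | _ => case: (nc4 H1 H2) => ? ? ? ?; assert (ncd a b c d) by exact I
     end
  end.

Lemma nc8 a b c d : e a b -> e c d ->
  [/\ ~ (pos a < pos c /\ pos c < pos b /\ pos b < pos d),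
      ~ (pos b < pos c /\ pos c < pos a /\ pos a < pos d),
      ~ (pos a < pos d /\ pos d < pos b /\ pos b < pos c),
      ~ (pos b < pos d /\ pos d < pos a /\ pos a < pos c) &
   [/\ ~ (pos c < pos a /\ pos a < pos d /\ pos d < pos b),
      ~ (pos d < pos a /\ pos a < pos c /\ pos c < pos b),
      ~ (pos c < pos b /\ pos b < pos d /\ pos d < pos a) &
      ~ (pos d < pos b /\ pos b < pos c /\ pos c < pos a)]].
Proof.
move=> h1 h2; case: (nc4 h1 h2) (nc4 h2 h1) => ? ? ? ? [? ? ? ?]; by split.
Qed.

Tactic Notation "X" constr(h1) constr(h2) := have [? ? ? ? [? ? ? ?]] := nc8 h1 h2.

Tactic Notation "Y" constr(a) constr(b) constr(c) constr(d) :=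
  have := @nc a b c d ltac:(by rewrite // esym) ltac:(by rewrite // esym).

Ltac crs := match goal with H1 : is_true (e ?a ?b), H2 : is_true (e ?c ?d) |- _ => X H1 H2; lia end.

Lemma pne a b : a != b -> pos a != pos b.
Proof. by move=> ab; apply/eqP => /pinj /eqP; apply/negP. Qed.

Lemma tri3 a b c : e a b -> e b c -> e a c -> False.
Proof. by move=> h1 h2 h3; apply: (@tri a b c); split => //; rewrite esym. Qed.

Lemma claimA t x1 x2 : e t x1 -> e t x2 -> x1 != x2 -> covers x1 t -> covers x2 t -> False.
Proof.
move=> e1 e2 x12 /coversP[y1 [f1 b1]] /coversP[y2 [f2 b2]].
have n1 : y1 != x2.
  by apply/eqP => h; subst y1; apply: (tri3 e1 f1 e2).
have n2 : y2 != x1.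
  by apply/eqP => h; subst y2; apply: (tri3 e2 f2 e1).
have q1 := pne n1; have q2 := pne n2; have q3 := pne x12.
have q4 := epneq e1; have q5 := epneq e2.
move: b1 b2; rewrite /btw => b1 b2.
have [[l1 m1]|[l1 m1]] : (pos x1 < pos t /\ pos t < pos y1) \/ (pos t < pos x1 /\ pos y1 < pos t)
  by move: b1 q4; clear; lia.
all: have [[l2 m2]|[l2 m2]] : (pos x2 < pos t /\ pos t < pos y2) \/ (pos t < pos x2 /\ pos y2 < pos t)
  by move: b2 q5; clear; lia.
all: clear b1 b2 q4 q5.
- have [l3|l3] : pos x1 < pos x2 \/ pos x2 < pos x1 by lia.
  + Y x1 t x2 y2; lia.
  + Y x2 t x1 y1; lia.
- case: (ltngtP (pos y1) (pos x2)) => ?; [Y x1 y1 t x2; lia | |lia].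
  case: (ltngtP (pos y2) (pos x1)) => ?; [Y y2 x2 x1 y1; lia|Y x1 t y2 x2; lia|lia].
- case: (ltngtP (pos y2) (pos x1)) => ?; [Y x2 y2 t x1; lia | |lia].
  case: (ltngtP (pos y1) (pos x2)) => ?; [Y y1 x1 x2 y2; lia|Y x2 t y1 x1; lia|lia].
- have [l3|l3] : pos x1 < pos x2 \/ pos x2 < pos x1 by lia.
  + Y y1 x1 t x2; lia.
  + Y y2 x2 t x1; lia.
Qed.

Lemma claimB t x1 x2 : e t x1 -> e t x2 -> pos x1 < pos x2 < pos t -> covers t x2.
Proof.
move=> e1 e2 h; apply/coversP; exists x1; split => //; rewrite /btw; lia.
Qed.

Lemma claimB' t x1 x2 : e t x1 -> e t x2 -> pos t < pos x1 < pos x2 -> covers t x1.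
Proof.
move=> e1 e2 h; apply/coversP; exists x2; split => //; rewrite /btw; lia.
Qed.


Lemma ncovP x t : ~~ covers x t -> forall y, e x y -> ~~ btw x y t.
Proof. move=> h y exy; apply/negP => hb; case/negP: h; apply/coversP; by exists y. Qed.

Lemma fourC_lt t t' w w' : pos t < pos t' -> e t t' -> ~~ covers t t' -> ~~ covers t' t ->
  e w t -> covers w t -> e w' t' -> covers w' t' ->
  e w w' /\ (pos w < pos t /\ pos t < pos t' /\ pos t' < pos w').
Proof.
move=> lt ett' n1 n2 ewt /coversP[b [ewb bb]] ewt' /coversP[a [ewa ba]].
have h1 := ncovP n1; have h2 := ncovP n2.
have etw : e t w by rewrite esym.
have et'w' : e t' w' by rewrite esym.
have wt' : w != t'.
  apply/eqP => h; subst w; case/negP: n2; apply/coversP; by exists b.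
have w't : w' != t.
  apply/eqP => h; subst w'; case/negP: n1; apply/coversP; by exists a.
have q1 := pne wt'; have q2 := pne w't; have q3 := epneq ewt; have q4 := epneq ewt'.
have i1 := h1 w etw; have i2 := h2 w' et'w'.
move: bb ba i1 i2; rewrite /btw => bb ba i1 i2.
have s1 : pos w < pos t.
  case: (ltngtP (pos w) (pos t)) => // h; last by clear -h q3; lia.
  have hw : pos w < pos t' by clear -i1 q1 lt h; lia.
  have hb : pos b < pos t by clear -bb h; lia.
  by Y b w t t'; clear -hw hb h; lia.
have s2 : pos t' < pos b.
  have hb : pos t < pos b by clear -bb s1; lia.
  case: (ltngtP (pos b) (pos t')) => h.
  - by Y w b t t'; clear -hb h s1; lia.
  - done.
  - have bt' : b = t' by apply: pinj.
    subst b; case/negP: n2; apply/coversP; exists w; split; first by rewrite esym.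
    by rewrite /btw; clear -s1 lt; lia.
have s3 : pos t' < pos w'.
  case: (ltngtP (pos w') (pos t')) => // h; last by clear -h q4; lia.
  have hw : pos t < pos w' by clear -i2 q2 lt h; lia.
  have ha : pos t' < pos a by clear -ba h; lia.
  by Y t t' w' a; clear -hw ha h; lia.
have s4 : pos a < pos t.
  have ha : pos a < pos t' by clear -ba s3; lia.
  case: (ltngtP (pos a) (pos t)) => h.
  - done.
  - by Y t t' a w'; clear -ha h s3; lia.
  - have at_ : a = t by apply: pinj.
    subst a; case/negP: n1; apply/coversP; exists w'; split; first by rewrite esym.
    by rewrite /btw; clear -s3 lt; lia.
split; last by [].
case: (ltngtP (pos a) (pos w)) => h.
- case: (ltngtP (pos b) (pos w')) => h'.
  + by Y w b t' w'; clear -s1 lt s2 h'; lia.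
  + by Y a w' w b; clear -h s1 lt s3 h'; lia.
  + by have -> : w' = b by apply: pinj.
- by Y w t a w'; clear -h s4 lt s3; lia.
- have wa : w = a by apply: pinj.
  by rewrite wa esym.
Qed.



Lemma fourC t t' w w' : e t t' -> ~~ covers t t' -> ~~ covers t' t ->
  e w t -> covers w t -> e w' t' -> covers w' t' ->
  e w w' /\ ((pos w < pos t /\ pos t < pos t' /\ pos t' < pos w') \/
             (pos w' < pos t' /\ pos t' < pos t /\ pos t < pos w)).
Proof.
move=> ett' n1 n2 ewt c1 ewt' c2.
have := epneq ett'; case: (ltngtP (pos t) (pos t')) => // lt _.
  have [h1 h2] := fourC_lt lt ett' n1 n2 ewt c1 ewt' c2.
  split; [exact: h1 | left; clear -h2; lia].
have et't : e t' t by rewrite esym.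
have [h1 h2] := fourC_lt lt et't n2 n1 ewt' c2 ewt c1.
split; [by rewrite esym | right; clear -h2; lia].
Qed.

Lemma uniq4 w w' t1 t1' t2 t2' : e w t1 -> e w t2 -> e t1 t1' -> e t2 t2' ->
  e w' t1' -> e w' t2' -> t1 != t2 ->
  ((pos w < pos t1 /\ pos t1 < pos t1' /\ pos t1' < pos w') \/
   (pos w' < pos t1' /\ pos t1' < pos t1 /\ pos t1 < pos w)) ->
  ((pos w < pos t2 /\ pos t2 < pos t2' /\ pos t2' < pos w') \/
   (pos w' < pos t2' /\ pos t2' < pos t2 /\ pos t2 < pos w)) -> False.
Proof.
move=> a1 a2 b1 b2 c1 c2 t12 k1 k2.
have q := pne t12.
have tr1 : t1' != t2.
  apply/eqP => h; subst t1'; exact: (tri3 a1 b1 a2).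
have tr2 : t2' != t1.
  apply/eqP => h; subst t2'; exact: (tri3 a2 b2 a1).
have r1 := pne tr1; have r2 := pne tr2.
case: k1 => k1; case: k2 => k2; try (clear -k1 k2; lia).
- case: (ltngtP (pos t1) (pos t2)) => h; last by clear -h q; lia.
  + case: (ltngtP (pos t1') (pos t2)) => h'; last by clear -h' r1; lia.
    * by Y w t2 t1' w'; clear -k1 k2 h h'; lia.
    * by Y w t2 t1 t1'; clear -k1 k2 h h'; lia.
  + case: (ltngtP (pos t2') (pos t1)) => h'; last by clear -h' r2; lia.
    * by Y w t1 t2' w'; clear -k1 k2 h h'; lia.
    * by Y w t1 t2 t2'; clear -k1 k2 h h'; lia.
- case: (ltngtP (pos t1) (pos t2)) => h; last by clear -h q; lia.
  + case: (ltngtP (pos t2') (pos t1)) => h'; last by clear -h' r2; lia.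
    * by Y t2' t2 t1 w; clear -k1 k2 h h'; lia.
    * by Y w' t2' t1 w; clear -k1 k2 h h'; lia.
  + case: (ltngtP (pos t1') (pos t2)) => h'; last by clear -h' r1; lia.
    * by Y t1' t1 t2 w; clear -k1 k2 h h'; lia.
    * by Y w' t1' t2 w; clear -k1 k2 h h'; lia.
Qed.

End Outer.


Lemma card_bigcup_le (T I : finType) (A : {pred I}) (F : I -> {set T}) :
  #|\bigcup_(i in A) F i| <= \sum_(i in A) #|F i|.
Proof.
apply: (@big_ind2 _ _ (fun (S : {set T}) n => #|S| <= n)) => //.
- by rewrite cards0.
- move=> S1 n1 S2 n2 h1 h2; apply: leq_trans (leq_card_setU S1 S2).1 _; exact: leq_add.
Qed.

Lemma le1_of (T : finType) (A : {set T}) : (forall x y, x \in A -> y \in A -> x = y) -> #|A| <= 1.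
Proof.
move=> h; rewrite leqNgt; apply/negP => /card_gt1P [x [y [xA yA xy]]].
by rewrite (h x y xA yA) eqxx in xy.
Qed.

Section OCol.
Variable T : finType.
Variable e : rel T.
Variable pos : T -> nat.
Hypothesis esym : symmetric e.
Hypothesis eirr : irreflexive e.
Hypothesis pinj : injective pos.
Hypothesis nc : forall a b c d, e a b -> e c d ->
  ~ (pos a < pos c /\ pos c < pos b /\ pos b < pos d).
Hypothesis tri : triangle_free e.

Notation covers := (covers e pos).
Notation depth := (depth e pos).

Definition bef v u := (depth v < depth u) || ((depth v == depth u) && (pos v < pos u)).
Definition NN := #|{: T * T}|.
Definition MM := (\max_x pos x).+1.
Definition rk x := (NN - depth x) * MM + (MM - pos x).

Lemma depth_le x : depth x <= NN.
Proof. exact: max_card. Qed.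

Lemma pos_lt x : pos x < MM.
Proof. by rewrite ltnS; apply: (leq_bigmax x). Qed.

Lemma rk_lt u v : (rk u < rk v) = bef v u.
Proof.
rewrite /rk /bef.
have := depth_le u; have := depth_le v; have := pos_lt u; have := pos_lt v.
set du := depth u; set dv := depth v; set pu := pos u; set pv := pos v.
move=> h1 h2 h3 h4.
case: (ltngtP dv du) => h /=.
- have m1 : (NN - du).+1 * MM <= (NN - dv) * MM by apply: leq_mul => //; lia.
  rewrite mulSn in m1; move: m1.
  move: ((NN - du) * MM) ((NN - dv) * MM) => X Y; lia.
- have m1 : (NN - dv).+1 * MM <= (NN - du) * MM by apply: leq_mul => //; lia.
  rewrite mulSn in m1; move: m1.
  move: ((NN - du) * MM) ((NN - dv) * MM) => X Y; lia.
- rewrite h ?eqxx /=; apply/idP/idP => ?; lia.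
Qed.

Lemma bef_total u v : u != v -> bef u v || bef v u.
Proof.
move=> uv; rewrite /bef; have := pne pinj uv; case: (ltngtP (depth u) (depth v)) => //= _; lia.
Qed.

Lemma rk_inj : injective rk.
Proof.
move=> u v h; apply/eqP; apply/negPn/negP => uv.
case/orP: (bef_total uv); rewrite -!rk_lt h ltnn //.
Qed.

Lemma dlt_iff y u : e y u -> (depth y < depth u) = covers y u.
Proof.
move=> h; apply/idP/idP; [exact: cov_of_lt | exact: depth_lt].
Qed.

Lemma deq_iff y u : e y u -> (depth y == depth u) = ~~ covers y u && ~~ covers u y.
Proof.
move=> h; have h' : e u y by rewrite esym.
apply/idP/idP.
  move/eqP => eq; apply/andP; split; apply/negP => c.
    by have := depth_lt esym eirr pinj nc h c; rewrite eq ltnn.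
  by have := depth_lt esym eirr pinj nc h' c; rewrite eq ltnn.
by case/andP => c1 c2; rewrite (depth_eq esym eirr pinj nc h c1 c2).
Qed.

Lemma par_le2 u : #|par e rk u| <= 2.
Proof.
set P1 := [set y | e u y && covers y u].
set P2 := [set y | [&& e u y, ~~ covers y u, ~~ covers u y & pos y < pos u]].
have sub : par e rk u \subset P1 :|: P2.
  apply/subsetP => y; rewrite !inE rk_lt /bef => /andP[euy].
  have eyu : e y u by rewrite esym.
  rewrite (dlt_iff eyu) (deq_iff eyu) euy /=.
  by case: (covers y u) => //=.
apply: leq_trans (subset_leq_card sub) _.
apply: leq_trans (leq_card_setU P1 P2).1 _.
have -> : (2 = 1 + 1)%N by [].
apply: leq_add; apply: le1_of => x y; rewrite !inE.
- move=> /andP[ex cx] /andP[ey cy]; apply/eqP/negPn/negP => xy.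
  exact: (claimA esym eirr pinj nc tri ex ey xy cx cy).
- move=> /and4P[ex c1 c2 px] /and4P[ey c3 c4 py]; apply/eqP/negPn/negP => xy.
  have := pne pinj xy; case: ltngtP => // h _.
    by rewrite (claimB ex ey (_ : pos x < pos y < pos u)) ?h ?py in c4.
  by rewrite (claimB ey ex (_ : pos y < pos x < pos u)) ?h ?px in c2.
Qed.

End OCol.


Section OCol2.
Variable T : finType.
Variable e : rel T.
Variable pos : T -> nat.
Hypothesis esym : symmetric e.
Hypothesis eirr : irreflexive e.
Hypothesis pinj : injective pos.
Hypothesis nc : forall a b c d, e a b -> e c d ->
  ~ (pos a < pos c /\ pos c < pos b /\ pos b < pos d).
Hypothesis tri : triangle_free e.
Variable d : nat.

Notation covers := (covers e pos).
Notation depth := (depth e pos).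

Definition heavy x := d < deg e x.
Definition upw t w := e t w && covers w t.

Lemma up_uniq t w1 w2 : upw t w1 -> upw t w2 -> w1 = w2.
Proof.
move=> /andP[e1 c1] /andP[e2 c2]; apply/eqP/negPn/negP => w12.
exact: (claimA esym eirr pinj nc tri e1 e2 w12 c1 c2).
Qed.

Definition CC := [set t | (deg e t <= d) && [exists w, upw t w && heavy w]].
Definition cmpw (t t' w w' : T) :=
  (depth w' < depth w) || ((depth w' == depth w) && (pos t' < pos t)).
Definition lose t t' := [exists w, [exists w', [&& upw t w, upw t' w' & cmpw t t' w w']]].
Definition II := [set t in CC | ~~ [exists t', [&& t' \in CC, e t t' & lose t t']]].

Lemma II_light x : x \in II -> ~~ heavy x.
Proof. by rewrite !inE => /andP[/andP[h _] _]; rewrite /heavy -leqNgt. Qed.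

Lemma II_indep x y : x \in II -> y \in II -> ~~ e x y.
Proof.
move=> xI yI; apply/negP => exy.
move: (xI) (yI); rewrite !inE => /andP[/andP[_ /existsP[wx /andP[ux hx]]] nx].
move=> /andP[/andP[_ /existsP[wy /andP[uy hy]]] ny].
have xC : x \in CC by move: xI; rewrite inE => /andP[].
have yC : y \in CC by move: yI; rewrite inE => /andP[].
have eyx : e y x by rewrite esym.
have xy : pos x != pos y by apply: epneq.
have l : lose x y || lose y x.
  rewrite /lose /cmpw; case: (ltngtP (depth wy) (depth wx)) => h.
  - apply/orP; left; apply/existsP; exists wx; apply/existsP; exists wy; by rewrite ux uy h.
  - apply/orP; right; apply/existsP; exists wy; apply/existsP; exists wx; by rewrite ux uy h.
  - case: (ltngtP (pos y) (pos x)) xy => // h' _.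
      apply/orP; left; apply/existsP; exists wx; apply/existsP; exists wy.
      by rewrite ux uy h eqxx ?h' ?orbT.
    apply/orP; right; apply/existsP; exists wy; apply/existsP; exists wx.
    by rewrite ux uy h eqxx ?h' ?orbT.
case/orP: l => l.
  by case/negP: nx; apply/existsP; exists y; rewrite yC exy l.
by case/negP: ny; apply/existsP; exists x; rewrite xC eyx l.
Qed.

Definition XX w := [set t | [&& e w t, t \notin II & ~~ heavy t]].

Lemma load w : heavy w -> #|XX w| <= 6.
Proof.
move=> hw.
set A := [set t | e w t && ~~ covers w t].
have cA : #|A| <= 3.
  set A1 := [set t | e w t && covers t w].
  set A2 := [set t | [&& e w t, ~~ covers t w, ~~ covers w t & pos t < pos w]].
  set A3 := [set t | [&& e w t, ~~ covers t w, ~~ covers w t & pos w < pos t]].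
  have sub : A \subset A1 :|: (A2 :|: A3).
    apply/subsetP => t; rewrite !inE => /andP[ewt cwt]; rewrite ewt cwt /=.
    case: (covers t w) => //=.
    by have := epneq eirr pinj ewt; case: ltngtP.
  apply: leq_trans (subset_leq_card sub) _.
  apply: leq_trans (leq_card_setU _ _).1 _.
  have -> : 3 = (1 + (1 + 1))%N by [].
  apply: leq_add; last apply: leq_trans (leq_card_setU _ _).1 _; last apply: leq_add.
  - apply: le1_of => x y; rewrite !inE => /andP[ex cx] /andP[ey cy].
    apply/eqP/negPn/negP => xy; exact: (claimA esym eirr pinj nc tri ex ey xy cx cy).
  - apply: le1_of => x y; rewrite !inE => /and4P[ex c1 c2 px] /and4P[ey c3 c4 py].
    apply/eqP/negPn/negP => xy.
    have := pne pinj xy; case: ltngtP => // h _.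
      by rewrite (claimB ex ey (_ : pos x < pos y < pos w)) ?h ?py in c4.
    by rewrite (claimB ey ex (_ : pos y < pos x < pos w)) ?h ?px in c2.
  - apply: le1_of => x y; rewrite !inE => /and4P[ex c1 c2 px] /and4P[ey c3 c4 py].
    apply/eqP/negPn/negP => xy.
    have := pne pinj xy; case: ltngtP => // h _.
      by rewrite (claimB' ex ey (_ : pos w < pos x < pos y)) ?h ?px in c2.
    by rewrite (claimB' ey ex (_ : pos w < pos y < pos x)) ?h ?py in c4.
set B := XX w :\: A.
have Bfacts : forall t, t \in B -> [/\ e w t, t \notin II, ~~ heavy t & covers w t].
  move=> t; rewrite !inE => /andP[nA /and3P[ewt tI lt]]; split => //.
  by move: nA; rewrite ewt /= negbK.
pose spec t w' := [exists t', [&& t' \in CC, e t t', upw t' w' & cmpw t t' w w']].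
have specB : forall t, t \in B -> exists w', spec t w'.
  move=> t /Bfacts [ewt tI lt cwt].
  have utw : upw t w by rewrite /upw esym ewt cwt.
  have tC : t \in CC.
    rewrite inE (_ : deg e t <= d) /=; last by rewrite leqNgt.
    by apply/existsP; exists w; rewrite utw hw.
  move: tI; rewrite inE tC /= negbK => /existsP[t' /and3P[t'C ett' /existsP[w0 /existsP[w0' /and3P[u0 u0' cm]]]]].
  have w0w := up_uniq u0 utw; subst w0.
  by exists w0'; apply/existsP; exists t'; rewrite t'C ett' u0' cm.
have specA : forall t w', t \in B -> spec t w' -> exists t',
    [/\ e t t', e w' t', e w w', ~~ covers w w' &
      (pos w < pos t /\ pos t < pos t' /\ pos t' < pos w') \/
      (pos w' < pos t' /\ pos t' < pos t /\ pos t < pos w)].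
  move=> t w' tB /existsP[t' /and4P[t'C ett' /andP[et'w' cw't'] cm]].
  have [ewt tI lt cwt] := Bfacts t tB.
  have utw : upw t w by rewrite /upw esym ewt cwt.
  have n1 : ~~ covers t' t.
    apply/negP => c; have ut : upw t t' by rewrite /upw ett' c.
    have := up_uniq ut utw => h; subst t'.
    by move: t'C; rewrite inE => /andP[h _]; move: hw; rewrite /heavy; lia.
  have n2 : ~~ covers t t'.
    apply/negP => c; have et't : e t' t by rewrite esym.
    have ut : upw t' t by rewrite /upw et't c.
    move: t'C; rewrite inE => /andP[_ /existsP[w'' /andP[u'' h'']]].
    have := up_uniq ut u'' => h; subst w''.
    by rewrite h'' in lt.
  have ew't' : e w' t' by rewrite esym.
  have [eww' cfg] := fourC esym eirr pinj nc ett' n2 n1 ewt cwt ew't' cw't'.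
  exists t'; split => //.
  apply/negP => c; have := depth_lt esym eirr pinj nc eww' c.
  by move: cm; rewrite /cmpw; case: ltngtP.
pose g t := odflt w [pick w' | spec t w'].
have gspec : forall t, t \in B -> spec t (g t).
  move=> t tB; rewrite /g; case: pickP => [w' //|none].
  by have [w' h] := specB t tB; rewrite none in h.
have gA : forall t, t \in B -> g t \in A.
  move=> t tB; have [t' [_ _ eww' nc' _]] := specA t (g t) tB (gspec t tB).
  by rewrite inE eww' nc'.
have ginj : {in B &, injective g}.
  move=> t1 t2 t1B t2B h; apply/eqP/negPn/negP => t12.
  have [t1' [e1 f1 eww1 _ cf1]] := specA t1 (g t1) t1B (gspec t1 t1B).
  have [t2' [e2 f2 eww2 _ cf2]] := specA t2 (g t2) t2B (gspec t2 t2B).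
  have [ew1 _ _ _] := Bfacts t1 t1B; have [ew2 _ _ _] := Bfacts t2 t2B.
  rewrite -h in f2 cf2.
  have f1' : e (g t1) t1' by [].
  apply: (uniq4 esym pinj nc tri ew1 ew2 e1 e2 f1' f2 t12 cf1 cf2).
have cB : #|B| <= #|A|.
  rewrite -(card_in_imset ginj); apply: subset_leq_card; apply/subsetP => a.
  by case/imsetP => t tB ->; apply: gA.
rewrite -(cardsID A (XX w)).
have : #|XX w :&: A| <= #|A| by apply: subset_leq_card; apply/subsetP => t; rewrite inE => /andP[].
by rewrite -/B; lia.
Qed.

End OCol2.


Section OCol3.
Variable T : finType.
Variable e : rel T.
Variable pos : T -> nat.
Hypothesis esym : symmetric e.
Hypothesis eirr : irreflexive e.
Hypothesis pinj : injective pos.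
Hypothesis nc : forall a b c d, e a b -> e c d ->
  ~ (pos a < pos c /\ pos c < pos b /\ pos b < pos d).
Hypothesis tri : triangle_free e.
Variable d : nat.

Notation rk := (rk e pos).
Notation II := (II e pos d).
Notation XX := (XX e pos d).
Notation heavy := (heavy e d).

Lemma card_del (A : {set T}) u : u \in A -> #|A :\ u| = #|A| - 1.
Proof. by move=> uA; rewrite (cardsD1 u A) uA add1n subn1. Qed.

Lemma outer_col b : 6 <= d -> #|[set x | heavy x]| + (3 * d).+1 <= b -> ab_colorable e 1 b.
Proof.
move=> d6 hb.
have rinj : injective rk by apply: rk_inj.
apply: (@gcl _ e esym [set x | heavy x] II rk (3 * d).+1 b rinj) => //.
- move=> x y xI yI; exact: (II_indep esym eirr pinj xI yI).
- by move=> x xI; rewrite inE; exact: (II_light xI).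
move=> u uI; rewrite inE => uH.
set P := par e rk u.
set Q := \bigcup_(z in P) (XX z :\ u).
set Z := [set z | u \in par e rk z].
set R := \bigcup_(z in Z) (par e rk z :\ u).
have sub : [set v | [&& v \notin II, v \notin [set x | heavy x], rk u < rk v & conf e u v]]
    \subset P :|: Q :|: R.
  apply/subsetP => v; rewrite !inE => /and4P[vI vH ruv cuv].
  case: (conf_cases esym eirr rinj ruv cuv) => [pv|[z pz [ezv vu]]|[z [h1 h2 h3]]].
  - by move: pv; rewrite inE => ->.
  - apply/orP; left; apply/orP; right; apply/bigcupP; exists z => //.
    by rewrite !inE vu ezv vI vH.
  - apply/orP; right; apply/bigcupP; exists z; first by rewrite inE.
    by move: h2; rewrite !inE h3 => ->.
apply: leq_ltn_trans (subset_leq_card sub) _.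
apply: leq_ltn_trans (leq_card_setU _ _).1 _.
have cP : #|P| <= 2 by apply: par_le2.
have cQ : #|Q| <= 2 * (d - 1).
  apply: leq_trans (card_bigcup_le _ _) _.
  apply: (@leq_trans (\sum_(z in P) (d - 1))); last first.
    by rewrite sum_nat_const; apply: leq_mul.
  apply: leq_sum => z pz.
  have uX : u \in XX z.
    rewrite /XX inE; apply/and3P; split => //.
      by move: pz; rewrite inE esym => /andP[].
  rewrite card_del //.
  case: (boolP (heavy z)) => hz.
    have := load esym eirr pinj nc tri hz; lia.
  have : #|XX z| <= deg e z.
    by apply: subset_leq_card; apply/subsetP => t; rewrite !inE => /andP[-> _].
  by move: hz; rewrite /heavy -leqNgt; lia.
have cR : #|R| <= d.
  apply: leq_trans (card_bigcup_le _ _) _.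
  apply: (@leq_trans (\sum_(z in Z) 1)).
    apply: leq_sum => z; rewrite inE => uz.
    by rewrite card_del //; have := par_le2 esym eirr pinj nc tri z; lia.
  rewrite sum1_card; apply: (@leq_trans (deg e u)).
    apply: subset_leq_card; apply/subsetP => z; rewrite !inE esym => /andP[-> _] //.
  by move: uH; rewrite /heavy -leqNgt.
apply: leq_ltn_trans (leq_add (leq_card_setU _ _).1 (leqnn _)) _.
lia.
Qed.

End OCol3.


Section RealPart.
Local Open Scope R_scope.

Lemma real_forest (n b : nat) :
  Rle (Rmult (Rmult 4 (sqrt 2)) (sqrt (INR n))) (INR b) -> (32 * n <= b * b)%coq_nat.
Proof.
move=> h.
have hn : (0 <= INR n) by apply: pos_INR.
have h0 : (0 <= 4 * sqrt 2 * sqrt (INR n)).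
  apply: Rmult_le_pos; [apply: Rmult_le_pos; [lra| apply: sqrt_pos] | apply: sqrt_pos].
have hsq : (4 * sqrt 2 * sqrt (INR n) * (4 * sqrt 2 * sqrt (INR n)) <= INR b * INR b).
  by apply: Rmult_le_compat.
have e1 : (4 * sqrt 2 * sqrt (INR n) * (4 * sqrt 2 * sqrt (INR n)) =
           16 * (sqrt 2 * sqrt 2) * (sqrt (INR n) * sqrt (INR n))) by ring.
rewrite e1 sqrt_sqrt ?sqrt_sqrt in hsq; try lra.
apply: INR_le; rewrite !mult_INR.
have -> : INR 32 = 32 by rewrite INR_IZR_INZ.
lra.
Qed.

Lemma real_outer (n b : nat) :
  Rle (Rminus (Rmult (Rmult 4 (sqrt (Rdiv 34 5))) (sqrt (INR n))) 1) (INR b) ->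
  (544 * n <= 5 * (b.+1 * b.+1))%coq_nat.
Proof.
move=> h.
have hn : (0 <= INR n) by apply: pos_INR.
have hb : INR b.+1 = (INR b + 1) by rewrite S_INR.
have h0 : (0 <= 4 * sqrt (34 / 5) * sqrt (INR n)).
  apply: Rmult_le_pos; [apply: Rmult_le_pos; [lra| apply: sqrt_pos] | apply: sqrt_pos].
have h1 : (4 * sqrt (34 / 5) * sqrt (INR n) <= INR b.+1) by rewrite hb; lra.
have hsq : (4 * sqrt (34/5) * sqrt (INR n) * (4 * sqrt (34/5) * sqrt (INR n)) <= INR b.+1 * INR b.+1).
  by apply: Rmult_le_compat.
have e1 : (4 * sqrt (34/5) * sqrt (INR n) * (4 * sqrt (34/5) * sqrt (INR n)) =
           16 * (sqrt (34/5) * sqrt (34/5)) * (sqrt (INR n) * sqrt (INR n))) by ring.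
rewrite e1 sqrt_sqrt ?sqrt_sqrt in hsq; try lra.
apply: INR_le; rewrite !mult_INR.
have -> : INR 544 = 544 by rewrite INR_IZR_INZ.
have -> : INR 5 = 5 by rewrite INR_IZR_INZ.
move: hsq; set X := (INR b.+1 * INR b.+1) => hsq.
lra.
Qed.

End RealPart.

Section Final.
Variable T : finType.
Variable e : rel T.
Hypothesis esym : symmetric e.
Hypothesis eirr : irreflexive e.

Lemma triv_col b : #|T| <= b -> ab_colorable e 1 b.
Proof.
move=> hb.
have rinj : injective (fun x : T => val (enum_rank x)).
  by move=> x y /val_inj /enum_rank_inj.
apply: (@gcl _ e esym setT set0 _ 0 b rinj) => //.
- by move=> x y; rewrite inE.
- by move=> x; rewrite inE.
- by move=> u _; rewrite inE.
- by rewrite cardsT addn0.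
Qed.

Lemma forest_main b : forest e -> 32 * #|T| <= b * b -> ab_colorable e 1 b.
Proof.
move=> fe hb.
case: (leqP #|T| b) => [hn|hn]; first exact: triv_col.
have [r [rinj r1]] := forest_rank esym eirr fe.
set n := #|T| in hn hb.
have b32 : 32 < b by nia.
have [m [m1 m2]] : exists m, 2 * m <= b /\ b <= 2 * m + 1.
  exists b./2; rewrite -{2 4}(odd_double_half b); case: (odd b) => /=; lia.
apply: (@forest_col _ e esym eirr r m.-1 b rinj r1).
have := degsum esym eirr rinj r1 m.-1; rewrite -/n.
set h := #|_|.
have -> : m.-1.+1 = m by lia.
move=> hh; nia.
Qed.

Lemma outer_main b : triangle_free e -> outerplanar e ->
  544 * #|T| <= 5 * (b.+1 * b.+1) -> ab_colorable e 1 b.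
Proof.
move=> tri [pos [pinj nc]] hb.
case: (leqP #|T| b) => [hn|hn]; first exact: triv_col.
set n := #|T| in hn hb.
have b108 : 108 <= b by nia.
have [m [m1 m2]] : exists m, 6 * m <= b.+1 /\ b.+1 <= 6 * m + 5.
  exists (b.+1 %/ 6); have := divn_eq b.+1 6; have := ltn_pmod b.+1 (isT : 0 < 6); lia.
have nc' : forall a b c d, e a b -> e c d -> ~ (pos a < pos c /\ pos c < pos b /\ pos b < pos d).
  by move=> a b' c d h1 h2; apply: nc.
apply: (@outer_col _ e pos esym eirr pinj nc' tri m.-1 b); first by lia.
have rinj : injective (rk e pos) := @rk_inj _ e _ pinj.
have := degsum esym eirr rinj (par_le2 esym eirr pinj nc' tri) m.-1; rewrite -/n.
rewrite /heavy; set h := #|_|.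
have -> : m.-1.+1 = m by lia.
move=> hh; nia.
Qed.

End Final.

Unset Implicit Arguments.

Theorem mainTheorem16 (T : finType) (e : rel T) :
  simple_graph e ->
  (forest e ->
     forall b : nat, Rle (Rmult (Rmult 4 (sqrt 2)) (sqrt (INR #|T|))) (INR b) ->
       ab_colorable e 1 b) /\
  (triangle_free e -> outerplanar e ->
     forall b : nat, Rle (Rminus (Rmult (Rmult 4 (sqrt (Rdiv 34 5))) (sqrt (INR #|T|))) 1) (INR b) ->
       ab_colorable e 1 b).
Proof.
move=> [esym eirr]; split.
  move=> fe b h; apply: forest_main => //.
  by have := real_forest h; rewrite -!multE; move/leP.
move=> tri op b h; apply: outer_main => //.
by have := real_outer h; rewrite -!multE; move/leP.
Qed.
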